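(* Let $(n_i)_{i\ge1}$ be positive integers with $n_i\mid n_j$ for all $i\le j$ and $n_j\to\infty$, let $X=\varprojlim \mathbb{Z}/n_i\mathbb{Z}$ and let $T:X\to X$ be the odometer map $T((x_i+n_i\mathbb{Z})_i)=(x_i+1+n_i\mathbb{Z})_i$. Let $p$ be a prime. Then the following are equivalent: (1) for every continuous map $f:X\to\mathbb{Z}/p\mathbb{Z}$ there is a continuous map $L:X\to\mathbb{Z}/p\mathbb{Z}$ with $f(x)=L(Tx)-L(x)$ for all $x\in X$ (i.e. the cocycle determined by $c(1,x)=f(x)$ is a coboundary); (2) $\sup_i \operatorname{ord}(p,n_i)=\infty$, where $\operatorname{ord}(p,n)=\max\{k\ge 0: p^k\mid n\}$.
   Context: $\varprojlim \mathbb{Z}/n_i\mathbb{Z}=\{(x_i+n_i\mathbb{Z})_{i\ge1}\in\prod_i\mathbb{Z}/n_i\mathbb{Z}: n_i\mid (x_{i+1}-x_i)\ \forall i\}$ with the product topology. *)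

(* Defs.v *)
From HB Require Import structures.
From mathcomp Require Import all_boot all_order all_algebra.
From mathcomp Require Import all_classical all_reals all_analysis.
Set Implicit Arguments. Unset Strict Implicit. Unset Printing Implicit Defensive.
Local Open Scope classical_set_scope.

(* The inverse limit X = lim_<- Z/n_i Z is realised as a subspace of the
   product  prod_i Z/n_i Z, where the i-th factor Z/n_i Z (discrete) is
   represented by its canonical representatives {0,...,n_i - 1} inside the
   discrete space nat.  Indices start at 0 (paper: at 1). *)

Definition ambient : topologicalType := prod_topology (fun _ : nat => nat).

Definition invlim_set (n : nat -> nat) : set ambient :=
  [set x | forall i, (x i < n i)%N /\ x i.+1 = x i %[mod n i]].

Definition invlim (n : nat -> nat) : topologicalType :=
  set_type (invlim_set n).

(* the odometer x |-> (x_i + 1 mod n_i)_i ; the fallback branch is never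
   used when n_i > 0 and n_i | n_{i+1} (then the image lies in X). *)
Definition odometer (n : nat -> nat) (x : invlim n) : invlim n :=
  let y : ambient := fun i => ((sval x i).+1 %% n i)%N in
  match pselect (y \in invlim_set n) with
  | left h => exist _ y h
  | right _ => x
  end.

Definition Zp_disc (p : nat) : topologicalType := discrete_topology 'Z_p.

(* Main.v *)
Require Import Defs.
From HB Require Import structures.
From mathcomp Require Import all_boot all_order all_algebra.
From mathcomp Require Import all_classical all_reals all_analysis.
Set Implicit Arguments. Unset Strict Implicit.
Import GRing.Theory.
Local Open Scope classical_set_scope.

Lemma invlimP {n : nat -> nat} (x : invlim n) : invlim_set n (sval x).
Proof. exact: (set_mem (valP x)). Qed.

Lemma odoE (n : nat -> nat) (n_pos : forall i, (0 < n i)%N)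
  (n_dvd : forall i j, (i <= j)%N -> (n i %| n j)%N) (x : invlim n) :
  sval (odometer x) = (fun i => ((sval x i).+1 %% n i)%N).
Proof.
rewrite /odometer; case: pselect => [h|nh] //; exfalso; apply: nh.
apply/mem_set => i; split; first by rewrite ltn_pmod.
have [_ H] := invlimP x i.
by rewrite (modn_dvdm _ (n_dvd i i.+1 (leqnSn i))) modn_mod -addn1 -modnDml H modnDml addn1.
Qed.

Lemma pt_in (n : nat -> nat) (n_pos : forall i, (0 < n i)%N)
  (n_dvd : forall i j, (i <= j)%N -> (n i %| n j)%N) r :
  (fun i => (r %% n i)%N) \in invlim_set n.
Proof.
apply/mem_set => i; split; first by rewrite ltn_pmod.
by rewrite modn_dvdm ?n_dvd // modn_mod.
Qed.

Definition pt (n : nat -> nat) n_pos n_dvd r : invlim n :=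
  exist (fun x => x \in invlim_set n) _ (@pt_in n n_pos n_dvd r).

Lemma odo_pt n n_pos n_dvd r :
  odometer (@pt n n_pos n_dvd r : invlim n) = pt n_pos n_dvd r.+1.
Proof.
apply: val_inj; rewrite /= (odoE n_pos n_dvd) /=.
by apply: funext => i; rewrite -[(r %% n i).+1]addn1 modnDml addn1.
Qed.

Lemma cont_coord (n : nat -> nat) (Y : topologicalType) (h : nat -> Y) j :
  continuous (fun x : invlim n => h (sval x j)).
Proof.
move=> x.
have c1 : continuous (h : nat -> Y).
  by move=> m U hU; apply: open_nbhs_nbhs; split; [exact: discrete_open|exact: (nbhs_singleton hU)].
apply: (@continuous_comp _ _ _ (fun x : invlim n => sval x j) h); last exact: c1.
apply: (@continuous_comp _ _ _ (fun x : invlim n => (sval x : ambient)) (fun y : ambient => y j)).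
  exact: initial_continuous.
exact: proj_continuous.
Qed.

Lemma coord_mod (n : nat -> nat)
  (n_dvd : forall i j, (i <= j)%N -> (n i %| n j)%N) (x : invlim n) i j :
  (i <= j)%N -> sval x i = (sval x j %% n i)%N.
Proof.
have H := invlimP x.
elim: j => [|j IH]; first by rewrite leqn0 => /eqP ->; rewrite modn_small //; case: (H 0).
rewrite leq_eqVlt => /orP [/eqP <-|]; first by rewrite modn_small //; case: (H i).
rewrite ltnS => /[dup] hij /IH ->.
case: (H j) => hj1 hj2.
by rewrite -(modn_small hj1) -hj2 modn_dvdm // n_dvd.
Qed.

Lemma loc_const (n : nat -> nat)
  (n_dvd : forall i j, (i <= j)%N -> (n i %| n j)%N) p
  (g : invlim n -> Zp_disc p) (z : invlim n) :
  {for z, continuous g} -> exists j, forall y, sval y j = sval z j -> g y = g z.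
Proof.
move=> cg; case: (pselect (exists j, forall y, sval y j = sval z j -> g y = g z)) => // nH.
have : forall j, exists y, sval y j = sval z j /\ g y <> g z.
  move=> j; apply: contrapT => hj; apply: nH; exists j => y hy.
  by apply: contrapT => hne; apply: hj; exists y.
move=> /choice [Yf HY].
have cv : (fun j => (sval (Yf j) : ambient)) @ \oo --> (sval z : ambient).
  apply/pointwise_cvgP => t; apply: (@cvg_near_cst _ _ _ (fun j : nat => sval (Yf j) t) \oo).
  near=> j.
  have tj : (t <= j)%N by near: j; exact: nbhs_infty_ge.
  by rewrite (coord_mod n_dvd (Yf j) tj) (coord_mod n_dvd z tj) (HY j).1.
have := cg _ (discrete_set1 (g z)).
move=> [B [[W oW eB] Bz] sub].
have Wz : nbhs (sval z : ambient) W.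
  apply: open_nbhs_nbhs; split => //; by rewrite -eB in Bz.
have hW : \forall j \near \oo, W (sval (Yf j)) := cv _ Wz.
have [j Wj] := filter_ex hW.
have : B (Yf j) by rewrite -eB.
by move=> /sub /= hj; case: ((HY j).2 hj).
Unshelve. all: by end_near.
Qed.

Lemma fin_bound (P : nat -> nat -> Prop) m :
  (forall a l l', P a l -> (l <= l')%N -> P a l') ->
  (forall a, (a < m)%N -> exists l, P a l) -> exists L, forall a, (a < m)%N -> P a L.
Proof.
move=> mono; elim: m => [|m IH] H; first by exists 0.
have [L1 HL1] : exists L, forall a, (a < m)%N -> P a L.
  by apply: IH => a am; apply: H; rewrite ltnS ltnW.
have [lm Hm] := H m (ltnSn m).
exists (maxn L1 lm) => a; rewrite ltnS leq_eqVlt => /orP [/eqP ->|am].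
  by apply: mono Hm _; rewrite leq_maxr.
by apply: mono (HL1 a am) _; rewrite leq_maxl.
Qed.

Lemma unif_level (n : nat -> nat) (n_pos : forall i, (0 < n i)%N)
  (n_dvd : forall i j, (i <= j)%N -> (n i %| n j)%N) (T : Type) (f : invlim n -> T) :
  (forall z, exists j, forall y, sval y j = sval z j -> f y = f z) ->
  exists N, forall x y, sval x N = sval y N -> f x = f y.
Proof.
move=> loc; apply: contrapT => nogood.
have bad : forall N, exists x y, sval x N = sval y N /\ f x <> f y.
  move=> N; apply: contrapT => hN; apply: nogood; exists N => x y hxy.
  by apply: contrapT => hne; apply: hN; exists x, y.
pose bad' l j a := exists x y, sval x l = sval y l /\ sval x j = a /\ f x <> f y.
pose pers j a := forall l, bad' l j a.
have mono : forall j a l l', ~ bad' l j a -> (l <= l')%N -> ~ bad' l' j a.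
  move=> j a l l' nb ll' [x [y [e1 [e2 e3]]]]; apply: nb; exists x, y; split => //.
  by rewrite (coord_mod n_dvd x ll') (coord_mod n_dvd y ll') e1.
have step0 : exists a, pers 0 a.
  apply: contrapT => np.
  have [L HL] : exists L, forall a, (a < n 0)%N -> ~ bad' L 0 a.
    apply: fin_bound; first by move=> a l l'; exact: mono.
    move=> a _; apply: contrapT => hl; apply: np; exists a => l.
    by apply: contrapT => hb; apply: hl; exists l.
  have [x [y [e1 e2]]] := bad L.
  apply: (HL (sval x 0)); first by case: (invlimP x 0).
  by exists x, y.
have step : forall j a, pers j a -> exists b, (b %% n j = a)%N /\ pers j.+1 b.
  move=> j a pa; apply: contrapT => np.
  have [L HL] : exists L, forall b, (b < n j.+1)%N -> (b %% n j = a)%N -> ~ bad' L j.+1 b.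
    apply: fin_bound.
      by move=> b l l' hb ll' hba; apply: mono (hb hba) ll'.
    move=> b _; apply: contrapT => hl; exfalso; apply: np; exists b.
    have hba : (b %% n j = a)%N.
      by apply: contrapT => hne; apply: hl; exists 0 => /hne.
    split => // l; apply: contrapT => hb; apply: hl; exists l => _; exact: hb.
  have [x [y [e1 [e2 e3]]]] := pa L.
  apply: (HL (sval x j.+1)).
  - by case: (invlimP x j.+1).
  - by rewrite -(coord_mod n_dvd x (leqnSn j)).
  by exists x, y.
have [a0 pa0] := step0.
have : forall ja : nat * nat, exists b, pers ja.1 ja.2 -> (b %% n ja.1 = ja.2)%N /\ pers ja.1.+1 b.
  move=> [j a] /=; case: (pselect (pers j a)) => hp.
    by have [b hb] := step j a hp; exists b.
  by exists 0.
move=> /choice [nxt Hnxt].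
pose s := fix s j := if j is j'.+1 then nxt (j', s j') else a0.
have ps : forall j, pers j (s j).
  elim => [|j IH] //=; exact: (Hnxt (j, s j) IH).2.
have sn : forall j, (s j < n j)%N.
  move=> j; have [x [y [_ [e2 _]]]] := ps j 0.
  by rewrite -e2; case: (invlimP x j).
have sin : s \in invlim_set n.
  apply/mem_set => j; split; first exact: sn.
  by rewrite /= (Hnxt (j, s j) (ps j)).1 /= modn_small // sn.
pose z : invlim n := exist (fun x => x \in invlim_set n) s sin.
have [j0 Hj0] := loc z.
have [x [y [e1 [e2 e3]]]] := ps j0 j0.
apply: e3; rewrite (Hj0 x e2) (Hj0 y) //.
by rewrite -e1.
Qed.

Lemma bounded_max (a : nat -> nat) k :
  (forall i, (a i < k)%N) -> exists j, forall i, (a i <= a j)%N.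
Proof.
elim: k => [|k IH] H; first by have := H 0.
case: (pselect (exists j, a j = k)) => [[j hj]|nj].
  by exists j => i; rewrite hj -ltnS.
apply: IH => i; have := H i; rewrite ltnS leq_eqVlt => /orP [/eqP e|//].
by exfalso; apply: nj; exists i.
Qed.

Unset Implicit Arguments.
Local Open Scope ring_scope.

Theorem proposition3p4 (n : nat -> nat) (p : nat)
  (n_pos : forall i, (0 < n i)%N)
  (n_dvd : forall i j, (i <= j)%N -> (n i %| n j)%N)
  (n_infty : forall M : nat, exists N : nat, forall j, (N <= j)%N -> (M <= n j)%N)
  (p_prime : prime p) :
  (forall f : invlim n -> Zp_disc p, continuous f ->
     exists L : invlim n -> Zp_disc p, continuous L /\
       forall x : invlim n,
         (f x : 'Z_p) = (L (odometer x) : 'Z_p) - (L x : 'Z_p))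
  <-> (forall k : nat, exists i : nat, (k <= logn p (n i))%N).
Proof.
have p1 : (1 < p)%N by exact: prime_gt1.
split.
- move=> H1; apply: contrapT => nk.
  have [k Hk] : exists k, forall i, (logn p (n i) < k)%N.
    apply: contrapT => hk; apply: nk => k; apply: contrapT => hi; apply: hk; exists k => i.
    by rewrite ltnNge; apply/negP => hki; apply: hi; exists i.
  have [j Hj] := bounded_max Hk.
  have cop : forall l, (j <= l)%N -> ~~ (p %| n l %/ n j)%N.
    move=> l jl; apply/negP => pd.
    have qpos : (0 < n l %/ n j)%N by rewrite divn_gt0 // dvdn_leq // n_dvd.
    have hlog : logn p (n l) = (logn p (n l %/ n j) + logn p (n j))%N.
      by rewrite -lognM // divnK // n_dvd.
    have := Hj l; rewrite hlog -{2}[logn p (n j)]add0n leq_add2r leqn0 => /eqP h0.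
    have : (0 < logn p (n l %/ n j))%N by rewrite logn_gt0 mem_primes p_prime qpos pd.
    by rewrite h0.
  pose h0 (m : nat) : Zp_disc p := ((m %% n j == 0)%N%:R : 'Z_p).
  have [L [cL HL]] := H1 (fun x => h0 (sval x j)) (@cont_coord n _ h0 j).
  pose z0 := pt n_pos n_dvd 0.
  have [m Hm] := loc_const n_dvd (cL z0).
  have stepL : forall k0, (L (pt n_pos n_dvd k0.+1) : 'Z_p)
      = L (pt n_pos n_dvd k0) + h0 (k0 %% n j)%N.
    move=> k0; have := HL (pt n_pos n_dvd k0); rewrite odo_pt => e.
    change (h0 (k0 %% n j)%N) with (h0 (sval (pt n_pos n_dvd k0) j)).
    by rewrite e addrC subrK.
  have blk : forall a, (L (pt n_pos n_dvd (a * n j)) : 'Z_p) = L z0 + a%:R.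
    elim => [|a IH]; first by rewrite mul0n addr0.
    have inner : forall r, (r < n j)%N ->
        (L (pt n_pos n_dvd (a * n j + r.+1)) : 'Z_p) = L (pt n_pos n_dvd (a * n j)) + 1.
      elim => [|r IHr] hr.
        by rewrite addn1 stepL /h0 modn_mod modnMl eqxx.
      by rewrite addnS stepL IHr ?(ltnW hr) // /h0 modn_mod modnMDl modn_small //= addr0.
    have e : (a.+1 * n j = a * n j + (n j).-1.+1)%N by rewrite prednK // mulSnr.
    by rewrite e inner ?prednK // IH -addrA natr1.
  pose l := maxn m j.
  have eq0 : ((n l %/ n j)%N%:R : 'Z_p) = 0.
    have := blk (n l %/ n j)%N; rewrite divnK; last by exact: (n_dvd _ _ (leq_maxr _ _)).
    rewrite (Hm (pt n_pos n_dvd (n l))); last first.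
      by rewrite /= mod0n; apply/eqP; exact: (n_dvd _ _ (leq_maxl _ _)).
    by move=> e; apply: (@addrI _ (L z0 : 'Z_p)); rewrite addr0 -e.
  have := val_Zp_nat p1 (n l %/ n j)%N; rewrite eq0 /= => h.
  by move: (cop l (leq_maxr _ _)); rewrite /dvdn -h.
- move=> H2 f cf.
  have [N HN] := unif_level n_pos n_dvd (fun z => loc_const n_dvd (cf z)).
  pose G (r : nat) : 'Z_p := f (pt n_pos n_dvd r).
  have Gp : forall r r', (r %% n N = r' %% n N)%N -> G r = G r'.
    by move=> r r' e; apply: HN.
  have fG : forall x, (f x : 'Z_p) = G (sval x N).
    move=> x; apply: HN => /=; rewrite modn_small //; by case: (invlimP x N).
  have [i Hi] := H2 (logn p (n N)).+1.
  pose M := maxn i N.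
  have NM : (N <= M)%N by rewrite leq_maxr.
  have pq : (p %| n M %/ n N)%N.
    have qpos : (0 < n M %/ n N)%N by rewrite divn_gt0 // dvdn_leq // n_dvd.
    have hlog : logn p (n M) = (logn p (n M %/ n N) + logn p (n N))%N.
      by rewrite -lognM // divnK // n_dvd.
    have h2 : (logn p (n i) <= logn p (n M))%N.
      by apply: dvdn_leq_log => //; exact: (n_dvd _ _ (leq_maxl _ _)).
    have : (0 < logn p (n M %/ n N))%N.
      rewrite lt0n; apply/eqP => h0; move: (leq_trans Hi h2).
      by rewrite hlog h0 add0n ltnn.
    by rewrite logn_gt0 mem_primes => /and3P [].
  pose hL (m : nat) : Zp_disc p := \sum_(0 <= k < m) G k.
  exists (fun x => hL (sval x M)); split; first exact: (@cont_coord n _ hL M).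
  have per : forall a, \sum_(0 <= k < a * n N) G k = (\sum_(0 <= k < n N) G k) *+ a.
    elim => [|a IH]; first by rewrite mul0n big_geq.
    rewrite mulSnr (big_cat_nat (leq0n _) (leq_addr _ _)) IH mulrSr.
    congr (_ + _).
    rewrite -[X in \sum_(X <= _ < _) _]add0n big_addn addKn.
    by apply: eq_bigr => k _; apply: Gp; rewrite addnC modnMDl.
  have hM0 : hL (n M) = 0.
    rewrite /hL -(divnK (n_dvd _ _ NM)) per.
    have [q' ->] := dvdnP pq.
    by rewrite mulrnA -mulr_natr pchar_Zp // mulr0.
  move=> x.
  rewrite fG (odoE n_pos n_dvd) (coord_mod n_dvd x NM).
  have mM : (sval x M < n M)%N by case: (invlimP x M).
  move: mM; set m := sval x M => mM.
  have Gm : G (m %% n N)%N = G m by apply: Gp; rewrite modn_mod.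
  rewrite Gm.
  have hS : hL m.+1 = hL m + G m by rewrite /hL big_nat_recr.
  case: (ltngtP m.+1 (n M)) => [lt|gt|eq].
  + by rewrite modn_small // hS addrAC subrr add0r.
  + by rewrite ltnS leqNgt mM in gt.
  + rewrite eq modnn /hL big_geq // sub0r.
    move: hM0; rewrite -eq hS => /eqP; rewrite addrC addr_eq0 => /eqP.
    done.
Qed.
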